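(* Let $k\ge1$ be an integer, $G$ a graph and $A,B\subseteq V(G)$ with $\mathrm{dist}(A,B)>2^k$ and \[\mathrm{tp}_k\big(G\langle X\mapsto A\rangle[N_{2^{k-1}-1}[A]]\big)=\mathrm{tp}_k\big(G\langle X\mapsto B\rangle[N_{2^{k-1}-1}[B]]\big).\] Then for every first-order formula $\varphi(x)$ of quantifier rank at most $k-1$ in the signature of $G$, \[G\langle A\rangle\models\exists x\in A\ \varphi(x)\iff G\langle B\rangle\models\exists x\in B\ \varphi(x).\]
   Context: Graphs are finite, loopless, undirected, with finitely many unary color predicates. $\mathrm{dist}(A,B)$ is the minimum distance between a vertex of $A$ and a vertex of $B$; $N_r[S]$ is the set of vertices at distance at most $r$ from $S$. $G\langle X\mapsto W\rangle$ is $G$ expanded by a new unary predicate $X$ interpreted as $W$; $G\langle W\rangle$ is the expansion by a new unary predicate named $W$ interpreted as $W$; $\exists x\in W\,\psi$ abbreviates $\exists x\,(W(x)\wedge\psi)$. $H[S]$ denotes the induced substructure. $\mathrm{tp}_k(H)$ is the set of first-order sentences of quantifier rank at most $k$ true in $H$. *)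

(* Defs.v *)
From mathcomp Require Import all_boot.
Set Implicit Arguments. Unset Strict Implicit. Unset Printing Implicit Defensive.

Record struct (m : nat) := Struct {
  carrier : finType;
  radj : rel carrier;
  rcol : 'I_m -> {set carrier} }.
Arguments carrier {m}. Arguments radj {m}. Arguments rcol {m}.

Inductive formula (m : nat) : Type :=
  | FTrue | FFalse
  | FEq of nat & nat
  | FAdj of nat & nat
  | FCol of 'I_m & nat
  | FNot of formula m
  | FAnd of formula m & formula m
  | FOr of formula m & formula m
  | FEx of nat & formula m
  | FAll of nat & formula m.

Arguments FTrue {m}. Arguments FFalse {m}.
Arguments FEq {m}. Arguments FAdj {m}.

Fixpoint qr m (f : formula m) : nat :=
  match f with
  | FNot g => qr g
  | FAnd g h | FOr g h => maxn (qr g) (qr h)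
  | FEx _ g | FAll _ g => (qr g).+1
  | _ => 0
  end.

Fixpoint free m (f : formula m) (y : nat) : bool :=
  match f with
  | FTrue | FFalse => false
  | FEq i j | FAdj i j => (y == i) || (y == j)
  | FCol _ i => y == i
  | FNot g => free g y
  | FAnd g h | FOr g h => free g y || free h y
  | FEx x g | FAll x g => (y != x) && free g y
  end.

Definition sentence m (f : formula m) := forall y, ~~ free f y.

Definition upd (V : Type) (env : nat -> option V) (x : nat) (v : V) :=
  fun y => if y == x then Some v else env y.

(* Satisfaction; the (partial) assignment is an option-valued environment,
   so that structures with empty universe are handled correctly. *)
Fixpoint sat m (H : struct m) (f : formula m) (env : nat -> option (carrier H))
  : Prop :=
  match f with
  | FTrue => True
  | FFalse => False
  | FEq i j => match env i, env j with Some a, Some b => a = b | _, _ => False end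
  | FAdj i j => match env i, env j with
                | Some a, Some b => radj H a b | _, _ => False end
  | FCol c i => match env i with Some a => a \in rcol H c | None => False end
  | FNot g => ~ @sat m H g env
  | FAnd g h => @sat m H g env /\ @sat m H h env
  | FOr g h => @sat m H g env \/ @sat m H h env
  | FEx x g => exists v, @sat m H g (upd env x v)
  | FAll x g => forall v, @sat m H g (upd env x v)
  end.

Definition models m (H : struct m) (f : formula m) :=
  @sat m H f (fun _ => None).

Definition tp_eq m (k : nat) (H1 H2 : struct m) :=
  forall f : formula m, sentence f -> qr f <= k -> (models H1 f <-> models H2 f).

Definition graph_struct m (T : finType) (e : rel T) (col : 'I_m -> {set T}) :
  struct m := @Struct m T e col.

Definition expand m (T : finType) (col : 'I_m -> {set T}) (W : {set T}) :
  'I_m.+1 -> {set T} :=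
  fun i => match unlift ord_max i with Some j => col j | None => W end.

Definition induced m (H : struct m) (S : {set carrier H}) : struct m :=
  @Struct m {x : carrier H | x \in S}
     (fun x y => radj H (val x) (val y))
     (fun c => [set x | val x \in rcol H c]).
Arguments induced {m} H S.

Fixpoint lift_sig m (f : formula m) : formula m.+1 :=
  match f with
  | FTrue => FTrue | FFalse => FFalse
  | FEq i j => FEq i j | FAdj i j => FAdj i j
  | FCol c i => FCol (widen_ord (leqnSn m) c) i
  | FNot g => FNot (lift_sig g)
  | FAnd g h => FAnd (lift_sig g) (lift_sig h)
  | FOr g h => FOr (lift_sig g) (lift_sig h)
  | FEx x g => FEx x (lift_sig g)
  | FAll x g => FAll x (lift_sig g)
  end.

Definition ex_in_new m (x : nat) (phi : formula m) : formula m.+1 :=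
  FEx x (FAnd (FCol ord_max x) (lift_sig phi)).

Fixpoint walk_le (T : finType) (e : rel T) (r : nat) (x y : T) : bool :=
  match r with
  | 0 => x == y
  | r'.+1 => walk_le e r' x y || [exists z, walk_le e r' x z && e z y]
  end.

Definition nbhd (T : finType) (e : rel T) (r : nat) (S : {set T}) : {set T} :=
  [set y | [exists x in S, walk_le e r x y]].

Definition dist_gt (T : finType) (e : rel T) (A B : {set T}) (d : nat) :=
  forall a b, a \in A -> b \in B -> ~~ walk_le e d a b.

(* Main.v *)
Require Import Defs.
From mathcomp Require Import all_boot.
From mathcomp Require Import zify.
From Stdlib Require Import Classical.
Set Implicit Arguments. Unset Strict Implicit. Unset Printing Implicit Defensive.

Section Walks.
Variables (T : finType) (e : rel T).

Lemma walk_step n x y : walk_le e n x y -> walk_le e n.+1 x y.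
Proof. by move=> h; rewrite /= h. Qed.

Lemma walk_mono n n' x y : n <= n' -> walk_le e n x y -> walk_le e n' x y.
Proof.
move=> le; rewrite -(subnKC le); elim: (n' - n) => [|d IH] h; first by rewrite addn0.
by rewrite addnS; apply: walk_step; apply: IH.
Qed.

Lemma walk_refl n x : walk_le e n x x.
Proof. by apply: (@walk_mono 0) => //=. Qed.

Lemma walk_add n r x y z : walk_le e n x y -> walk_le e r y z -> walk_le e (n + r) x z.
Proof.
move=> hxy; elim: r z => [|r IH] z /=.
  by move/eqP=> <-; rewrite addn0.
rewrite addnS /= => /orP [h|/existsP [w /andP [h1 h2]]].
  by rewrite IH.
apply/orP; right; apply/existsP; exists w; by rewrite IH.
Qed.

Lemma walk_split n r x z : walk_le e (n + r) x z -> exists y, walk_le e n x y /\ walk_le e r y z.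
Proof.
elim: r z => [|r IH] z /=.
  by rewrite addn0 => h; exists z; split => //.
rewrite addnS /= => /orP [h|/existsP [w /andP [h1 h2]]].
  by have [y [h3 h4]] := IH _ h; exists y; split => //; rewrite h4.
have [y [h3 h4]] := IH _ h1; exists y; split => //.
by apply/orP; right; apply/existsP; exists w; rewrite h4.
Qed.

Lemma walk1 x y : walk_le e 1 x y = (x == y) || e x y.
Proof.
rewrite /=; congr (_ || _); apply/existsP/idP => [[z /andP [/eqP -> ->]] //|h].
by exists x; rewrite eqxx.
Qed.

Hypothesis esym : symmetric e.

Lemma walk_sym n x y : walk_le e n x y -> walk_le e n y x.
Proof.
elim: n x y => [|n IH] x y /=; first by rewrite eq_sym.
move=> /orP [h|/existsP [w /andP [h1 h2]]]; first by rewrite IH.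
have h3 : walk_le e 1 y w by rewrite walk1 esym h2 orbT.
by have := walk_add h3 (IH _ _ h1); rewrite add1n.
Qed.
End Walks.

Section Induced.
Variables (m : nat) (H : struct m) (S : {set carrier H}).

Lemma walk_induced_val n (p p' : carrier (induced H S)) :
  walk_le (radj (induced H S)) n p p' -> walk_le (radj H) n (sval p) (sval p').
Proof.
elim: n p' => [|n IH] p' /=; first by move/eqP => ->.
move=> /orP [h|/existsP [w /andP [h1 h2]]]; first by rewrite IH.
by apply/orP; right; apply/existsP; exists (sval w); rewrite IH.
Qed.

Lemma walk_lift n (p : carrier (induced H S)) c :
  walk_le (radj H) n (sval p) c ->
  (forall c', walk_le (radj H) n (sval p) c' -> c' \in S) ->
  exists p' : carrier (induced H S), sval p' = c /\ walk_le (radj (induced H S)) n p p'.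
Proof.
elim: n c => [|n IH] c.
  move=> /= /eqP <- _; exists p; split => //=.
move=> hw hS.
have hS' : forall c', walk_le (radj H) n (sval p) c' -> c' \in S.
  by move=> c' h; apply: hS; apply: walk_step.
have cS : c \in S by apply: hS.
move: hw => /= /orP [h|/existsP [w /andP [h1 h2]]].
  have [p' [h3 h4]] := IH _ h hS'; exists p'; split => //; by rewrite /= h4.
have [pw [h3 h4]] := IH _ h1 hS'.
exists (exist (fun x => x \in S) c cS); split => //=.
apply/orP; right; apply/existsP; exists pw; rewrite h4 /=.
by rewrite h3.
Qed.
End Induced.
Notation SAT H f env := (@sat _ H f env).

Fixpoint dlt {m} (j x y : nat) : formula m :=
  match j with
  | 0 => FOr (FEq x y) (FAdj x y)
  | j'.+1 => FEx (maxn x y).+1 (FAnd (dlt j' x (maxn x y).+1) (dlt j' (maxn x y).+1 y))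
  end.

Fixpoint eps {m} (j x : nat) : formula m.+1 :=
  match j with
  | 0 => FCol ord_max x
  | j'.+1 => FEx x.+1 (FAnd (eps j' x.+1) (dlt j' x.+1 x))
  end.

Lemma qr_dlt m j x y : qr (@dlt m j x y) = j.
Proof. by elim: j x y => [|j IH] x y //=; rewrite !IH maxnn. Qed.

Lemma qr_eps m j x : qr (@eps m j x) = j.
Proof. by elim: j x => [|j IH] x //=; rewrite IH qr_dlt maxnn. Qed.

Lemma free_dlt m j x y v : free (@dlt m j x y) v -> v = x \/ v = y.
Proof.
elim: j x y => [|j IH] x y /=.
  by rewrite orbb => /orP [/eqP|/eqP]; [left|right].
move=> /andP [hz /orP [/IH [->|h]|/IH [h|->]]]; auto; by rewrite h eqxx in hz.
Qed.

Lemma free_eps m j x v : free (@eps m j x) v -> v = x.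
Proof.
elim: j x => [|j IH] x /=; first by move/eqP.
move=> /andP [hz /orP [/IH h|/free_dlt [h|->]]] //; by rewrite h eqxx in hz.
Qed.

Lemma upd_same V (env : nat -> option V) x v : upd env x v x = Some v.
Proof. by rewrite /upd eqxx. Qed.

Lemma upd_other V (env : nat -> option V) x v y : y != x -> upd env x v y = env y.
Proof. by rewrite /upd => /negbTE ->. Qed.

Lemma dltP m (H : struct m) j x y env :
  SAT H (dlt j x y) env <->
  exists a b, env x = Some a /\ env y = Some b /\ walk_le (radj H) (2 ^ j) a b.
Proof.
elim: j x y env => [|j IH] x y env /=.
  have W : forall a b, ((a == b) || [exists z, (a == z) && radj H z b]) = (a == b) || radj H a b.
    by move=> a b; exact: walk1.
  split.
    case E1: (env x) => [a|]; case E2: (env y) => [b|]; try by case.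
    move=> h; exists a, b; do 2 split => //; rewrite W.
    by case: h => [->|->]; rewrite ?eqxx ?orbT.
  move=> [a [b [-> [-> ]]]]; rewrite W => /orP [/eqP ->|h]; by [left|right].
rewrite /=.
set z := (maxn x y).+1.
have xz : x != z by rewrite /z neq_ltn ltnS leq_maxl.
have yz : y != z by rewrite /z neq_ltn ltnS leq_maxr.
have E2 : 2 ^ j.+1 = 2 ^ j + 2 ^ j by rewrite expnS mul2n addnn.
split.
  move=> [c [/IH [a [c' [h1 [h2 h3]]]] /IH [c'' [b [h4 [h5 h6]]]]]].
  rewrite upd_other // in h1; rewrite upd_other // in h5.
  rewrite upd_same in h2 h4; injection h2 => ?; injection h4 => ?; subst.
  exists a, b; do 2 split => //; rewrite E2; exact: walk_add h3 h6.
move=> [a [b [h1 [h2]]]]; rewrite E2 => /walk_split [c [h3 h4]].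
exists c; split; apply/IH.
  by exists a, c; rewrite upd_same (upd_other _ _ xz).
by exists c, b; rewrite upd_same (upd_other _ _ yz).
Qed.

Lemma epsP m (H : struct m.+1) j x env :
  SAT H (eps j x) env <->
  exists p, env x = Some p /\ exists a, a \in rcol H ord_max /\ walk_le (radj H) (2 ^ j - 1) a p.
Proof.
elim: j x env => [|j IH] x env /=.
  rewrite ?expn0 ?subnn; split.
    case: (env x) => [p|] // h; exists p; split => //; exists p; by rewrite h eqxx.
  by move=> [p [-> [a [h /eqP <-]]]].
have xz : x != x.+1 by rewrite neq_ltn ltnSn.
have E2 : 2 ^ j.+1 - 1 = (2 ^ j - 1) + 2 ^ j.
  have := expn_gt0 2 j; rewrite expnS; lia.
split.
  move=> [c [/IH [c' [h1 [a [ha h2]]]] /dltP [c'' [p [h3 [h4 h5]]]]]].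
  rewrite upd_same in h1 h3; injection h1 => ?; injection h3 => ?; subst.
  rewrite upd_other // in h4.
  exists p; split => //; exists a; split => //; rewrite E2; exact: walk_add h2 h5.
move=> [p [hp [a [ha]]]]; rewrite E2 => /walk_split [c [h1 h2]].
exists c; split.
  apply/IH; exists c; rewrite upd_same; split => //; by exists a.
by apply/dltP; exists c, p; rewrite upd_same upd_other.
Qed.

Definition EqT m (H1 H2 : struct m) q N (h1 : nat -> option (carrier H1))
  (h2 : nat -> option (carrier H2)) :=
  forall f : formula m, qr f <= q -> (forall y, free f y -> y < N) ->
    (SAT H1 f h1 <-> SAT H2 f h2).

Lemma EqT_sym m (H1 H2 : struct m) q N h1 h2 :
  @EqT m H1 H2 q N h1 h2 -> @EqT m H2 H1 q N h2 h1.
Proof. by move=> h f h1' h2'; split; apply h. Qed.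

Lemma EqT_mono m (H1 H2 : struct m) q q' N h1 h2 :
  q' <= q -> @EqT m H1 H2 q N h1 h2 -> @EqT m H1 H2 q' N h1 h2.
Proof. by move=> le h f hq; apply: h; apply: leq_trans le. Qed.

Lemma conj_list m (H1 H2 : struct m) q N h1 h2 (u : carrier H1) (l : seq (carrier H2)) :
  (forall v, exists f : formula m, [/\ qr f <= q, (forall y, free f y -> y < N.+1),
       SAT H1 f (upd h1 N u) & ~ SAT H2 f (upd h2 N v)]) ->
  exists F : formula m, [/\ qr F <= q, (forall y, free F y -> y < N.+1),
       SAT H1 F (upd h1 N u) & forall v, v \in l -> ~ SAT H2 F (upd h2 N v)].
Proof.
move=> hv; elim: l => [|v l [F [hq hf hs hn]]].
  by exists FTrue; split.
have [f [fq ff fs fn]] := hv v.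
exists (FAnd f F); split => //=.
- by rewrite geq_max fq hq.
- by move=> y /orP [/ff|/hf].
- by move=> w; rewrite inE => /orP [/eqP -> [] //|/hn h [] _ /h].
Qed.

Lemma back_forth m (H1 H2 : struct m) q N h1 h2 :
  @EqT m H1 H2 q.+1 N h1 h2 -> forall u : carrier H1, exists v : carrier H2,
  @EqT m H1 H2 q N.+1 (upd h1 N u) (upd h2 N v).
Proof.
move=> hE u; apply: NNPP => hno.
have hv : forall v, exists f : formula m, [/\ qr f <= q, (forall y, free f y -> y < N.+1),
       SAT H1 f (upd h1 N u) & ~ SAT H2 f (upd h2 N v)].
  move=> v; apply: NNPP => hn; apply: hno; exists v => f fq ff.
  case: (classic (SAT H1 f (upd h1 N u))) => h1s; case: (classic (SAT H2 f (upd h2 N v))) => h2s;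
    try tauto.
  - by exfalso; apply: hn; exists f; split.
  - by exfalso; apply: hn; exists (FNot f); split.
have [F [Fq Ff Fs Fn]] := conj_list (enum (carrier H2)) hv.
have : SAT H1 (FEx N F) h1 by exists u.
move/hE => /= [] //.
  by move=> y /andP [yN /Ff]; rewrite ltnS leq_eqVlt (negbTE yN).
by move=> v; apply: Fn; rewrite mem_enum.
Qed.

Section Main.
Variables (m : nat) (T : finType) (e : rel T) (col : 'I_m -> {set T}) (k : nat).
Hypotheses (esym : symmetric e) (k1 : 0 < k).

Definition rr := 2 ^ k.-1 - 1.
Definition GS (W : {set T}) := graph_struct e (expand col W).
Definition LL (W : {set T}) := induced (GS W) (nbhd e rr W).
Definition G0 := graph_struct e col.
Definition Rq q := 2 ^ k.-1 - 2 ^ q.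
Definition env (W : {set T}) := nat -> option (carrier (LL W)).

Lemma expand_widen W (c : 'I_m) : expand col W (widen_ord (leqnSn m) c) = col c.
Proof.
rewrite /expand.
have -> : widen_ord (leqnSn m) c = lift ord_max c.
  by apply: val_inj; rewrite /= /bump leqNgt ltn_ord.
by rewrite liftK.
Qed.

Lemma expand_max W : expand col W ord_max = W.
Proof. by rewrite /expand unlift_none. Qed.

Lemma sat_lift W (phi : formula m) g : SAT (GS W) (lift_sig phi) g <-> SAT G0 phi g.
Proof.
elim: phi g => [||i j|i j|c i|f IH|f IHf g IHg|f IHf g IHg|x f IH|x f IH] g' /=; try tauto.
- by rewrite expand_widen.
- by rewrite IH.
- by rewrite IHf IHg.
- by rewrite IHf IHg.
- by split => [[v /IH h]|[v /IH h]]; exists v.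
- by split => h v; apply/IH/h.
Qed.

Lemma nbhdP r (W : {set T}) y : reflect (exists2 a, a \in W & walk_le e r a y) (y \in nbhd e r W).
Proof.
rewrite inE; apply: (iffP existsP) => [[a /andP [h1 h2]]|[a h1 h2]]; exists a => //.
by rewrite h1.
Qed.

Lemma sep A B x y : dist_gt e A B (2 ^ k) -> x \in nbhd e rr A -> y \in nbhd e rr B ->
  x <> y /\ ~~ e x y.
Proof.
move=> hd /nbhdP [a aA ha] /nbhdP [b bB hb].
have hb' := walk_sym esym hb.
have bound : rr.+1 + rr <= 2 ^ k.
  rewrite /rr; have := expn_gt0 2 k.-1.
  have : 2 ^ k = 2 * 2 ^ k.-1 by rewrite -expnS prednK.
  lia.
split.
  move=> xy; subst y; have := walk_add ha hb'.
  have b2 : rr + rr <= 2 ^ k by lia.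
  move/(walk_mono b2).
  by apply/negP; apply: hd.
apply/negP => exy.
have h1 : walk_le e rr.+1 a y.
  by rewrite /=; apply/orP; right; apply/existsP; exists x; rewrite ha exy.
have := walk_add h1 hb'; move/(walk_mono bound).
by apply/negP; apply: hd.
Qed.

Definition far A B q N (h1 : env A) (h2 : env B) (w : T) :=
  [/\ forall i p, i < N -> h1 i = Some p -> ~~ walk_le e (2 ^ q) w (sval p),
      forall i p, i < N -> h2 i = Some p -> ~~ walk_le e (2 ^ q) w (sval p)
    & forall a, a \in A :|: B -> ~~ walk_le e (2 ^ q - 1) a w].
Arguments far : clear implicits.

Definition Inv A B q N (h1 : env A) (h2 : env B) (sg : nat -> option nat)
  (s : nat -> bool) (g1 g2 : nat -> option T) :=
  [/\ q <= k.-1, @EqT _ (LL A) (LL B) q N h1 h2,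
    forall i, i < N -> exists p1 p2, [/\ h1 i = Some p1, h2 i = Some p2,
        (exists2 a, a \in A & walk_le e (Rq q) a (sval p1)) &
        (exists2 b, b \in B & walk_le e (Rq q) b (sval p2))],
    forall y i, sg y = Some i -> i < N /\ exists p1 p2, [/\ h1 i = Some p1, h2 i = Some p2,
        g1 y = Some (if s y then sval p1 else sval p2) &
        g2 y = Some (if s y then sval p2 else sval p1)]
  & forall y, sg y = None -> g1 y = g2 y /\ forall w, g1 y = Some w -> far A B q N h1 h2 w].
Arguments Inv : clear implicits.

Lemma Inv_swapG A B q N h1 h2 sg s g1 g2 :
  Inv A B q N h1 h2 sg s g1 g2 -> Inv A B q N h1 h2 sg (fun y => ~~ s y) g2 g1.
Proof.
case=> hq hE hS hV hF; split => //.
  move=> y i /hV [iN [p1 [p2 [a b c d]]]]; split => //; exists p1, p2.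
  by rewrite !if_neg; split.
by move=> y /hF [eq hw]; split => // w; rewrite -eq; exact: hw.
Qed.

Lemma Inv_swapAB A B q N h1 h2 sg s g1 g2 :
  Inv A B q N h1 h2 sg s g1 g2 -> Inv B A q N h2 h1 sg (fun y => ~~ s y) g1 g2.
Proof.
case=> hq hE hS hV hF; split => //.
- exact: EqT_sym.
- by move=> i /hS [p1 [p2 [a b c d]]]; exists p2, p1; split.
- move=> y i /hV [iN [p1 [p2 [a b c d]]]]; split => //; exists p2, p1.
  by rewrite !if_neg; split.
- move=> y /hF [eq hw]; split => // w /hw [f1 f2 f3]; split => //.
  by move=> a; rewrite setUC; apply: f3.
Qed.

Lemma near1 w z q : (w = z \/ e w z) -> walk_le e (2 ^ q) w z.
Proof.
move=> h; apply: (@walk_mono _ _ 1); first exact: expn_gt0.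
by rewrite walk1; case: h => [->|->]; rewrite ?eqxx ?orbT.
Qed.

Lemma Inv_cases A B q N h1 h2 sg s g1 g2 y :
  Inv A B q N h1 h2 sg s g1 g2 ->
  (exists i p1 p2, [/\ i < N, h1 i = Some p1, h2 i = Some p2,
        g1 y = Some (if s y then sval p1 else sval p2) &
        g2 y = Some (if s y then sval p2 else sval p1)]) \/
  (g1 y = g2 y /\ forall w, g1 y = Some w -> far A B q N h1 h2 w).
Proof.
case=> _ _ _ hV hF; case E: (sg y) => [i|].
  by have [iN [p1 [p2 [a b c d]]]] := hV _ _ E; left; exists i, p1, p2; split.
by right; apply: hF.
Qed.

Lemma atom2 A B q N h1 h2 sg s g1 g2 (R : T -> T -> Prop)
  (F : nat -> nat -> formula m.+1) :
  dist_gt e A B (2 ^ k) ->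
  Inv A B q N h1 h2 sg s g1 g2 ->
  (forall i j, qr (F i j) = 0 /\ forall y, free (F i j) y -> y = i \/ y = j) ->
  (forall W (h : env W) i j p1 p2, h i = Some p1 -> h j = Some p2 ->
      (SAT (LL W) (F i j) h <-> R (sval p1) (sval p2))) ->
  (forall x y, R x y -> x = y \/ e x y) ->
  forall i j,
  (match g1 i, g1 j with Some a, Some b => R a b | _, _ => False end) <->
  (match g2 i, g2 j with Some a, Some b => R a b | _, _ => False end).
Proof.
move=> hd I hF hsem hR i j.
have I' := I; case: I' => _ hE _ _ _.
have sepR : forall x y, x \in nbhd e rr A -> y \in nbhd e rr B -> ~ R x y /\ ~ R y x.
  move=> x y hx hy; have [n1 n2] := sep hd hx hy.
  split => /hR [h|h].
  - by apply: n1.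
  - by rewrite h in n2.
  - by apply: n1.
  - by rewrite esym h in n2.
have farR : forall w z, walk_le e (2 ^ q) w z -> False -> False by [].
have farR2 : forall w z, ~~ walk_le e (2 ^ q) w z -> ~ R w z /\ ~ R z w.
  move=> w z hn; split => /hR h; move/negP: hn; apply; apply: near1.
    by [].
  by case: h => [->|h]; [left|right; rewrite esym].
case: (Inv_cases i I) => [[i' [p1 [p2 [iN hp1 hp2 g1i g2i]]]] | [gi hfi]];
case: (Inv_cases j I) => [[j' [q1 [q2 [jN hq1 hq2 g1j g2j]]]] | [gj hfj]].
- rewrite g1i g1j g2i g2j.
  have loc : R (sval p1) (sval q1) <-> R (sval p2) (sval q2).
    have [F0 Ff] := hF i' j'.
    rewrite -(hsem _ _ _ _ _ _ hp1 hq1) -(hsem _ _ _ _ _ _ hp2 hq2).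
    apply: hE; first by rewrite F0.
    by move=> y /Ff [->|->].
  have s1 := sepR _ _ (proj2_sig p1) (proj2_sig q2).
  have s2 := sepR _ _ (proj2_sig q1) (proj2_sig p2).
  by case: (s i); case: (s j); tauto.
- rewrite g1i g2i -gj; case E: (g1 j) => [w|] //.
  have [f1 f2 _] := hfj _ E.
  have := farR2 _ _ (f1 _ _ iN hp1); have := farR2 _ _ (f2 _ _ iN hp2).
  by case: (s i); tauto.
- rewrite g1j g2j -gi; case E: (g1 i) => [w|] //.
  have [f1 f2 _] := hfi _ E.
  have := farR2 _ _ (f1 _ _ jN hq1); have := farR2 _ _ (f2 _ _ jN hq2).
  by case: (s j); tauto.
- by rewrite gi gj.
Qed.

Lemma atom_col A B q N h1 h2 sg s g1 g2 (c : 'I_m) i :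
  Inv A B q N h1 h2 sg s g1 g2 ->
  (match g1 i with Some a => a \in col c | None => False end) <->
  (match g2 i with Some a => a \in col c | None => False end).
Proof.
move=> I; have I' := I; case: I' => _ hE _ _ _.
case: (Inv_cases i I) => [[i' [p1 [p2 [iN hp1 hp2 g1i g2i]]]] | [gi hfi]]; last by rewrite gi.
rewrite g1i g2i.
have := hE (FCol (widen_ord (leqnSn m) c) i') (leq0n _).
rewrite /= hp1 hp2 !inE !expand_widen => h.
have {}h := h (fun y hy => ltac:(by move/eqP: hy => ->)).
by case: (s i); tauto.
Qed.

Lemma Rq_mono q : Rq q.+1 <= Rq q.
Proof. by rewrite /Rq leq_sub2l // leq_exp2l. Qed.

Lemma far_mono A B q N h1 h2 w : far A B q.+1 N h1 h2 w -> far A B q N h1 h2 w.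
Proof.
have le1 : 2 ^ q <= 2 ^ q.+1 by rewrite leq_exp2l.
have le2 : 2 ^ q - 1 <= 2 ^ q.+1 - 1 by rewrite leq_sub2r.
case=> f1 f2 f3; split.
- move=> i p iN hp; apply/negP => /(walk_mono le1); apply/negP; exact: f1 hp.
- move=> i p iN hp; apply/negP => /(walk_mono le1); apply/negP; exact: f2 hp.
- move=> a ha; apply/negP => /(walk_mono le2); apply/negP; exact: f3.
Qed.

Lemma stepA A B q N h1 h2 sg s g1 g2 x u (pu : carrier (LL A)) (pv : carrier (LL B)) :
  Inv A B q.+1 N h1 h2 sg s g1 g2 -> sval pu = u ->
  @EqT _ (LL A) (LL B) q N.+1 (upd h1 N pu) (upd h2 N pv) ->
  (exists2 a, a \in A & walk_le e (Rq q) a u) ->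
  (exists2 b, b \in B & walk_le e (Rq q) b (sval pv)) ->
  (forall w, far A B q.+1 N h1 h2 w -> ~~ walk_le e (2 ^ q) w u /\ ~~ walk_le e (2 ^ q) w (sval pv)) ->
  Inv A B q N.+1 (upd h1 N pu) (upd h2 N pv) (fun y => if y == x then Some N else sg y)
    (fun y => if y == x then true else s y) (upd g1 x u) (upd g2 x (sval pv)).
Proof.
case=> hq hE hS hV hF hu hE' ha hb hw; split => //.
- exact: ltnW.
- move=> i; rewrite ltnS leq_eqVlt => /orP [/eqP ->|iN].
    exists pu, pv; rewrite !upd_same; split => //; by rewrite hu.
  have iN' : i != N by rewrite neq_ltn iN.
  have [p1 [p2 [a b [a' aA ha'] [b' bB hb']]]] := hS _ iN.
  exists p1, p2; rewrite !upd_other //; split => //.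
    by exists a' => //; exact: walk_mono (Rq_mono q) ha'.
  by exists b' => //; exact: walk_mono (Rq_mono q) hb'.
- move=> y i; case: (eqVneq y x) => [->|yx].
    move=> [<-]; split => //; exists pu, pv; rewrite !upd_same hu; split => //.
  move=> /hV [iN [p1 [p2 [a b c d]]]]; split; first exact: ltnW.
  have iN' : i != N by rewrite neq_ltn iN.
  by exists p1, p2; rewrite !upd_other.
- move=> y; case: (eqVneq y x) => [-> //|yx] /hF [eq hfar].
  rewrite !upd_other //; split => // w /hfar hw0.
  have [n1 n2] := hw _ hw0.
  have [f1 f2 f3] := far_mono hw0.
  split.
  + move=> i p; rewrite ltnS leq_eqVlt => /orP [/eqP ->|iN]; first by rewrite upd_same => [[<-]]; rewrite hu.
    have iN' : i != N by rewrite neq_ltn iN.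
    by rewrite upd_other //; apply: f1.
  + move=> i p; rewrite ltnS leq_eqVlt => /orP [/eqP ->|iN]; first by rewrite upd_same => [[<-]].
    have iN' : i != N by rewrite neq_ltn iN.
    by rewrite upd_other //; apply: f2.
  + exact: f3.
Qed.

Lemma stepFar A B q N h1 h2 sg s g1 g2 x u :
  Inv A B q.+1 N h1 h2 sg s g1 g2 -> far A B q N h1 h2 u ->
  Inv A B q N h1 h2 (fun y => if y == x then None else sg y) s (upd g1 x u) (upd g2 x u).
Proof.
case=> hq hE hS hV hF hu; split => //.
- exact: ltnW.
- exact: EqT_mono hE.
- move=> i /hS [p1 [p2 [a b [a' aA ha'] [b' bB hb']]]]; exists p1, p2; split => //.
    by exists a' => //; exact: walk_mono (Rq_mono q) ha'.
  by exists b' => //; exact: walk_mono (Rq_mono q) hb'.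
- move=> y i; case: (eqVneq y x) => [-> //|yx] /hV [iN [p1 [p2 [a b c d]]]].
  by split => //; exists p1, p2; rewrite !upd_other.
- move=> y; case: (eqVneq y x) => [->|yx].
    by rewrite !upd_same; split => // w [<-].
  move=> /hF [eq hfar]; rewrite !upd_other //; split => // w /hfar; exact: far_mono.
Qed.

Lemma moveA A B q N h1 h2 sg s g1 g2 x u :
  Inv A B q.+1 N h1 h2 sg s g1 g2 ->
  (exists2 a, a \in A & walk_le e (2 ^ q - 1) a u) \/
  (exists i p, [/\ i < N, h1 i = Some p & walk_le e (2 ^ q) (sval p) u]) ->
  exists v N' (h1' : env A) (h2' : env B) sg' s',
    Inv A B q N' h1' h2' sg' s' (upd g1 x u) (upd g2 x v).
Proof.
move=> I; have I' := I; case: I' => hq hE hS hV hF.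
have t0 : 0 < 2 ^ q by rewrite expn_gt0.
have tK : 2 ^ q.+1 <= 2 ^ k.-1 by rewrite leq_exp2l.
have t2 : 2 ^ q.+1 = 2 ^ q + 2 ^ q by rewrite expnS mul2n addnn.
case => [[a aA hau] | [i [p [iN hp hpu]]]].
- have le1 : 2 ^ q - 1 <= rr by rewrite /rr; lia.
  have aN : a \in nbhd e rr A by apply/nbhdP; exists a => //; apply: walk_refl.
  pose pa := exist (fun z => z \in nbhd e rr A) a aN.
  have [pu [hu hwu]] : exists pu : carrier (LL A), sval pu = u /\
      walk_le (radj (LL A)) (2 ^ q - 1) pa pu.
    apply: (@walk_lift _ (GS A) (nbhd e rr A) _ pa u hau).
    by move=> c hc; apply/nbhdP; exists a => //; exact: walk_mono le1 hc.
  have [pv hE'] := back_forth hE pu.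
  have : SAT (LL A) (eps q N) (upd h1 N pu).
    apply/epsP; exists pu; split; first by rewrite upd_same.
    by exists pa; split => //; rewrite /= inE expand_max.
  move/(hE' (eps q N)); rewrite qr_eps => /(_ (leqnn _)).
  move/(_ (fun y hy => ltac:(by rewrite (free_eps hy)))).
  move/epsP => [p' [hp' [b' [hb' hwb]]]].
  rewrite upd_same in hp'; case: hp' => ?; subst p'.
  move: hb'; rewrite /= inE expand_max => hb'.
  have hwb' := walk_induced_val hwb.
  exists (sval pv), N.+1, (upd h1 N pu), (upd h2 N pv).
  exists (fun y => if y == x then Some N else sg y), (fun y => if y == x then true else s y).
  apply: (@stepA A B q N h1 h2 sg s g1 g2 x u pu pv I hu hE').
  + by exists a => //; apply: walk_mono hau; rewrite /Rq; lia.
  + by exists (sval b') => //; apply: walk_mono hwb'; rewrite /Rq; lia.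
  + move=> w [_ _ f3]; split; apply/negP => hw.
      have := walk_add hau (walk_sym esym hw).
      have le3 : 2 ^ q - 1 + 2 ^ q <= 2 ^ q.+1 - 1 by lia.
      move/(walk_mono le3); apply/negP; apply: f3; by rewrite inE aA.
    have := walk_add hwb' (walk_sym esym hw).
    have le3 : 2 ^ q - 1 + 2 ^ q <= 2 ^ q.+1 - 1 by lia.
    move/(walk_mono le3); apply/negP; apply: f3; by rewrite inE hb' orbT.
- have [p1 [p2 [hp1 hp2 [a aA ha] [b bB hb]]]] := hS _ iN.
  rewrite hp1 in hp; case: hp => ?; subst p1.
  have le1 : Rq q.+1 + 2 ^ q <= rr by rewrite /rr /Rq; lia.
  have [pu [hu hwu]] : exists pu : carrier (LL A), sval pu = u /\
      walk_le (radj (LL A)) (2 ^ q) p pu.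
    apply: (@walk_lift _ (GS A) (nbhd e rr A) _ p u hpu).
    by move=> c hc; apply/nbhdP; exists a => //; exact: walk_mono le1 (walk_add ha hc).
  have [pv hE'] := back_forth hE pu.
  have iN' : i != N by rewrite neq_ltn iN.
  have : SAT (LL A) (dlt q i N) (upd h1 N pu).
    by apply/dltP; exists p, pu; rewrite upd_same upd_other.
  move/(hE' (dlt q i N)); rewrite qr_dlt => /(_ (leqnn _)).
  move/(_ (fun y hy => ltac:(by case: (free_dlt hy) => ->; [exact: (ltn_trans iN (ltnSn N)) | exact: ltnSn]))).
  move/dltP => [p2' [pv' [h3 [h4 hw2]]]].
  rewrite upd_other // hp2 in h3; case: h3 => ?; subst p2'.
  rewrite upd_same in h4; case: h4 => ?; subst pv'.
  have hw2' := walk_induced_val hw2.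
  exists (sval pv), N.+1, (upd h1 N pu), (upd h2 N pv).
  exists (fun y => if y == x then Some N else sg y), (fun y => if y == x then true else s y).
  have le4 : Rq q.+1 + 2 ^ q <= Rq q by rewrite /Rq; lia.
  apply: (@stepA A B q N h1 h2 sg s g1 g2 x u pu pv I hu hE').
  + by exists a => //; exact: walk_mono le4 (walk_add ha hpu).
  + by exists b => //; exact: walk_mono le4 (walk_add hb hw2').
  + move=> w [f1 f2 _]; split; apply/negP => hw.
      have := walk_add hw (walk_sym esym hpu); rewrite -t2.
      by apply/negP; apply: f1 hp1.
    have := walk_add hw (walk_sym esym hw2'); rewrite -t2.
    by apply/negP; apply: f2 hp2.
Qed.

Lemma move_step A B q N h1 h2 sg s g1 g2 x u :
  Inv A B q.+1 N h1 h2 sg s g1 g2 ->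
  exists v N' (h1' : env A) (h2' : env B) sg' s',
    Inv A B q N' h1' h2' sg' s' (upd g1 x u) (upd g2 x v).
Proof.
move=> I.
case: (classic ((exists2 a, a \in A & walk_le e (2 ^ q - 1) a u) \/
  (exists i p, [/\ i < N, h1 i = Some p & walk_le e (2 ^ q) (sval p) u]))) => hA.
  exact: moveA I hA.
case: (classic ((exists2 a, a \in B & walk_le e (2 ^ q - 1) a u) \/
  (exists i p, [/\ i < N, h2 i = Some p & walk_le e (2 ^ q) (sval p) u]))) => hB.
  have [v [N' [h1' [h2' [sg' [s' I']]]]]] := moveA x (Inv_swapAB I) hB.
  by exists v, N', h2', h1', sg', (fun y => ~~ s' y); apply: Inv_swapAB.
exists u, N, h1, h2, (fun y => if y == x then None else sg y), s.
apply: stepFar I _; split.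
- move=> i p iN hp; apply/negP => /(walk_sym esym) hw; apply: hA; right; by exists i, p.
- move=> i p iN hp; apply/negP => /(walk_sym esym) hw; apply: hB; right; by exists i, p.
- move=> a; rewrite inE => /orP [aA|aB]; apply/negP => hw.
    by apply: hA; left; exists a.
  by apply: hB; left; exists a.
Qed.

Lemma main_lemma A B (hd : dist_gt e A B (2 ^ k)) (phi : formula m) :
  forall q N h1 h2 sg s g1 g2, Inv A B q N h1 h2 sg s g1 g2 -> qr phi <= q ->
  (SAT G0 phi g1 <-> SAT G0 phi g2).
Proof.
elim: phi => [||i j|i j|c i|f IH|f IHf g IHg|f IHf g IHg|x f IH|x f IH]
  q N h1 h2 sg s g1 g2 I hq.
- by [].
- by [].
- apply: (atom2 (R := fun a b => a = b) (F := fun i j => FEq i j) hd I) => //.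
  + by move=> i' j'; split => // y /= /orP [/eqP|/eqP]; [left|right].
  + by move=> W h i' j' p1 p2 /= -> ->; split => [->|/val_inj].
  + by move=> x y ->; left.
- apply: (atom2 (R := fun a b => e a b) (F := fun i j => FAdj i j) hd I) => //.
  + by move=> i' j'; split => // y /= /orP [/eqP|/eqP]; [left|right].
  + by move=> W h i' j' p1 p2 /= -> ->.
  + by move=> x y ->; right.
- exact: atom_col I.
- by rewrite /= (IH _ _ _ _ _ _ _ _ I hq).
- move: hq; rewrite /= geq_max => /andP [hf hg].
  by rewrite (IHf _ _ _ _ _ _ _ _ I hf) (IHg _ _ _ _ _ _ _ _ I hg).
- move: hq; rewrite /= geq_max => /andP [hf hg].
  by rewrite (IHf _ _ _ _ _ _ _ _ I hf) (IHg _ _ _ _ _ _ _ _ I hg).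
- case: q I hq => [|q] I hq //=; split.
    move=> [u hu].
    have [v [N' [h1' [h2' [sg' [s' I']]]]]] := move_step x u I.
    by exists v; apply/(IH _ _ _ _ _ _ _ _ I' hq).
  move=> [v hv].
  have [u [N' [h1' [h2' [sg' [s' I']]]]]] := move_step x v (Inv_swapG I).
  by exists u; apply/(IH _ _ _ _ _ _ _ _ I' hq).
- case: q I hq => [|q] I hq //=; split.
    move=> h v.
    have [u [N' [h1' [h2' [sg' [s' I']]]]]] := move_step x v (Inv_swapG I).
    by apply/(IH _ _ _ _ _ _ _ _ I' hq).
  move=> h u.
  have [v [N' [h1' [h2' [sg' [s' I']]]]]] := move_step x u I.
  by apply/(IH _ _ _ _ _ _ _ _ I' hq).
Qed.

Lemma one_dir A B (hd : dist_gt e A B (2 ^ k)) (ht : tp_eq k (LL A) (LL B))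
  (phi : formula m) x :
  qr phi <= k.-1 -> models (GS A) (ex_in_new x phi) -> models (GS B) (ex_in_new x phi).
Proof.
move=> hq [u [hu hphi]].
have uA : u \in A by move: hu; rewrite /= /upd eqxx expand_max.
move/sat_lift: hphi => hphi.
have uN : u \in nbhd e rr A by apply/nbhdP; exists u => //; apply: walk_refl.
pose pu := exist (fun z => z \in nbhd e rr A) u uN.
have E0 : @EqT _ (LL A) (LL B) k.-1.+1 0 (fun _ => None) (fun _ => None).
  rewrite prednK // => f fq ff; apply: ht => // y; apply/negP => /ff //.
have [pv hE'] := back_forth E0 pu.
have vB : sval pv \in B.
  have := hE' (FCol ord_max 0) (leq0n _) (fun y hy => ltac:(by move/eqP: hy => ->)).
  rewrite /= !inE !expand_max => h; apply/h; exact: uA.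
have I : Inv A B k.-1 1 (upd (fun _ => None) 0 pu) (upd (fun _ => None) 0 pv)
    (fun y => if y == x then Some 0 else None) (fun _ => true)
    (upd (fun _ => None) x u) (upd (fun _ => None) x (sval pv)).
  split => //.
  - move=> i; rewrite ltnS leqn0 => /eqP ->; exists pu, pv; rewrite !upd_same; split => //.
      by exists u => //; rewrite /Rq subnn /= eqxx.
    by exists (sval pv) => //; rewrite /Rq subnn /= eqxx.
  - move=> y i; case: (eqVneq y x) => [->|] // [<-]; split => //.
    by exists pu, pv; rewrite !upd_same.
  - move=> y; case: (eqVneq y x) => [-> //|yx] _; rewrite !upd_other //.
have h := (main_lemma hd I hq).1 hphi.
exists (sval pv); split; first by rewrite /= /upd eqxx expand_max.
by apply/(sat_lift (W := B)).
Qed.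
End Main.

Theorem lemma4p12 (m : nat) (T : finType) (e : rel T) (col : 'I_m -> {set T})
  (k : nat) (A B : {set T}) :
  symmetric e -> irreflexive e -> 1 <= k ->
  dist_gt e A B (2 ^ k) ->
  tp_eq k
    (induced (graph_struct e (expand col A)) (nbhd e (2 ^ k.-1 - 1) A))
    (induced (graph_struct e (expand col B)) (nbhd e (2 ^ k.-1 - 1) B)) ->
  forall (phi : formula m) (x : nat),
    (forall y, free phi y -> y = x) -> qr phi <= k.-1 ->
    (models (graph_struct e (expand col A)) (ex_in_new x phi) <->
     models (graph_struct e (expand col B)) (ex_in_new x phi)).
Proof.
move=> esym _ k1 hd ht phi x _ hq; split.
  exact: (one_dir esym k1 hd ht hq).
apply: (one_dir esym k1 _ _ hq).
- by move=> b a bB aA; apply/negP => /(walk_sym esym); apply/negP; apply: hd.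
- by move=> f fs fq; symmetry; apply: ht.
Qed.
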